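(* Assume $\kappa\le\lambda<0$, nonnegative progress values, $w\ge0$, and that a feasible trajectory pair exists. Let $(i^{cg},j^{cg})$ be a Stackelberg equilibrium (P1 leader) of the cooperative game $(A^c,B^c)$. Then $(i^{cg},j^{cg})$ is a Nash equilibrium of the blocking game $(A^b,B^b)$. Moreover, if a blocking pair $(i^b,j^b)$ (relative to $(i^{cg},j^{cg})$) is a Nash equilibrium of the cooperative game, then it is a Nash equilibrium of the blocking game.
   Context: Abstract two-player racing set-up. Player 1 (P1, the leader) chooses a trajectory $i\in\Gamma^1=\{1,\dots,n\}$, player 2 (P2) chooses $j\in\Gamma^2=\{1,\dots,m\}$. Each trajectory has a progress value $P^1_i\ge 0$ (resp. $P^2_j\ge 0$). Each trajectory is either on track or off track, and each pair $(i,j)$ either collides or not. A pair $(i,j)$ is feasible if $i$ and $j$ are both on track and $(i,j)$ does not collide. Constants $\kappa\le\lambda<0$ and $w\ge0$ are fixed. Cooperative game: $a^{c}_{i,j}=\kappa$ if $i$ is off track; otherwise $\lambda$ if $(i,j)$ collides; otherwise $P^1_i$. $b^{c}_{i,j}=\kappa$ if $j$ is off track; otherwise $\lambda$ if $(i,j)$ collides; otherwise $P^2_j$. Blocking game: $a^{b}_{i,j}=\kappa$ if $i$ is off track; otherwise $\lambda$ if $(i,j)$ collides; otherwise $P^1_i$ if $P^1_i<P^2_j$; otherwise $P^1_i+w$. $b^{b}_{i,j}=\kappa$ if $j$ is off track; otherwise $\lambda$ if $(i,j)$ collides; otherwise $P^2_j$ if $P^1_i\ge P^2_j$; otherwise $P^2_j+w$.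 Blocking pair (relative to a fixed Stackelberg equilibrium $(i^{cg},j^{cg})$ of the cooperative game): a pair $(i,j)$ such that (i) $P^1_{i^{cg}}<P^2_{j^{cg}}$; (ii) $P^1_i>P^2_j$; (iii) $(i,j)$ is feasible; (iv) for every $j^c\in\Gamma^2$ with $P^2_{j^c}>P^2_j$ one has $b^{c}_{i,j^c}\le\lambda$. For a bimatrix game $(A,B)$: $R(i)=\arg\max_{j}b_{i,j}$; $(i^*,j^* )$ is a Stackelberg equilibrium with P1 as leader if $i^*\in\arg\max_{i}\min_{j\in R(i)}a_{i,j}$ and $j^*\in R(i^* )$; $(i^*,j^* )$ is a Nash equilibrium if $a_{i^*,j^*}\ge a_{i,j^*}$ for all $i$ and $b_{i^*,j^*}\ge b_{i^*,j}$ for all $j$. Only pure strategies are considered. *)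

(* Defs.v *)
From Stdlib Require Import Reals Lra Lia.
Open Scope R_scope.

(* Abstract racing set-up. Trajectories of P1 are the naturals i < n,
   those of P2 the naturals j < m (i.e. Gamma^1 = {1..n} re-indexed from 0). *)
Record race := Race {
  n : nat;
  m : nat;
  P1 : nat -> R;
  P2 : nat -> R;
  on1 : nat -> bool;
  on2 : nat -> bool;
  coll : nat -> nat -> bool
}.

Definition feasible (g : race) (i j : nat) : Prop :=
  on1 g i = true /\ on2 g j = true /\ coll g i j = false.

Definition a_c (g : race) (kappa lambda : R) (i j : nat) : R :=
  if negb (on1 g i) then kappa
  else if coll g i j then lambda
  else P1 g i.

Definition b_c (g : race) (kappa lambda : R) (i j : nat) : R :=
  if negb (on2 g j) then kappa
  else if coll g i j then lambda
  else P2 g j.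

Definition a_b (g : race) (kappa lambda w : R) (i j : nat) : R :=
  if negb (on1 g i) then kappa
  else if coll g i j then lambda
  else if Rlt_dec (P1 g i) (P2 g j) then P1 g i
  else P1 g i + w.

Definition b_b (g : race) (kappa lambda w : R) (i j : nat) : R :=
  if negb (on2 g j) then kappa
  else if coll g i j then lambda
  else if Rge_dec (P1 g i) (P2 g j) then P2 g j
  else P2 g j + w.

Definition best_resp (m : nat) (B : nat -> nat -> R) (i j : nat) : Prop :=
  (j < m)%nat /\ forall j', (j' < m)%nat -> B i j' <= B i j.

Definition is_min_over (S : nat -> Prop) (f : nat -> R) (v : R) : Prop :=
  (exists j, S j /\ f j = v) /\ (forall j, S j -> v <= f j).

Definition stackelberg (n m : nat) (A B : nat -> nat -> R) (ist jst : nat) : Prop :=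
  (ist < n)%nat /\
  (exists vst, is_min_over (best_resp m B ist) (A ist) vst /\
     forall i v, (i < n)%nat -> is_min_over (best_resp m B i) (A i) v -> v <= vst) /\
  best_resp m B ist jst.

Definition nash (n m : nat) (A B : nat -> nat -> R) (ist jst : nat) : Prop :=
  (ist < n)%nat /\ (jst < m)%nat /\
  (forall i, (i < n)%nat -> A i jst <= A ist jst) /\
  (forall j, (j < m)%nat -> B ist j <= B ist jst).

Definition blocking_pair (g : race) (kappa lambda : R) (icg jcg i j : nat) : Prop :=
  (i < n g)%nat /\ (j < m g)%nat /\
  P1 g icg < P2 g jcg /\
  P1 g i > P2 g j /\
  feasible g i j /\
  (forall jc, (jc < m g)%nat -> P2 g jc > P2 g j -> b_c g kappa lambda i jc <= lambda).

(* Main.v *)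
Require Import Defs.
From Stdlib Require Import Reals Lra Lia.
Open Scope R_scope.

Lemma argmax_ex (f : nat -> R) (m : nat) : (0 < m)%nat ->
  exists j, (j < m)%nat /\ forall j', (j' < m)%nat -> f j' <= f j.
Proof.
  induction m as [|m IH]; intros H; [lia|].
  destruct m as [|m].
  - exists 0%nat; split; [lia|]; intros j' Hj; assert (j' = 0%nat) by lia; subst; lra.
  - destruct IH as [j [Hj Hm]]; [lia|].
    destruct (Rle_dec (f (S m)) (f j)).
    + exists j; split; [lia|]; intros j' Hj'.
      destruct (Nat.eq_dec j' (S m)); [subst; lra| apply Hm; lia].
    + exists (S m); split; [lia|]; intros j' Hj'.
      destruct (Nat.eq_dec j' (S m)); [subst; lra|].
      assert (f j' <= f j) by (apply Hm; lia); lra.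
Qed.

Lemma bc_nonneg g kappa lambda i j : kappa <= lambda -> lambda < 0 ->
  0 <= b_c g kappa lambda i j -> on2 g j = true /\ coll g i j = false /\ b_c g kappa lambda i j = P2 g j.
Proof.
  unfold b_c; intros; destruct (on2 g j), (coll g i j); simpl in *; auto; lra.
Qed.

Lemma min_feasible g kappa lambda i js : kappa <= lambda -> lambda < 0 ->
  on1 g i = true -> (js < m g)%nat -> on2 g js = true -> coll g i js = false ->
  0 <= P2 g js ->
  is_min_over (best_resp (m g) (b_c g kappa lambda) i) (a_c g kappa lambda i) (P1 g i).
Proof.
  intros Hk Hl H1 Hjs H2 H3 H4.
  assert (Hb : b_c g kappa lambda i js = P2 g js) by (unfold b_c; rewrite H2, H3; reflexivity).
  assert (Hac : forall j, best_resp (m g) (b_c g kappa lambda) i j -> a_c g kappa lambda i j = P1 g i).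
  { intros j [Hj Hmx]. specialize (Hmx js Hjs).
    destruct (bc_nonneg g kappa lambda i j Hk Hl) as [_ [Hc _]]; [lra|].
    unfold a_c; rewrite H1, Hc; reflexivity. }
  split.
  - destruct (argmax_ex (b_c g kappa lambda i) (m g)) as [j [Hj Hm]]; [lia|].
    exists j; split; [split; auto|]. apply Hac; split; auto.
  - intros j Hj; rewrite Hac; auto; lra.
Qed.

Theorem theorem2 (g : race) (kappa lambda w : R) :
  kappa <= lambda -> lambda < 0 -> 0 <= w ->
  (forall i, (i < n g)%nat -> 0 <= P1 g i) ->
  (forall j, (j < m g)%nat -> 0 <= P2 g j) ->
  (exists i j, (i < n g)%nat /\ (j < m g)%nat /\ feasible g i j) ->
  forall icg jcg,
    stackelberg (n g) (m g) (a_c g kappa lambda) (b_c g kappa lambda) icg jcg ->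
    nash (n g) (m g) (a_b g kappa lambda w) (b_b g kappa lambda w) icg jcg /\
    (forall ib jb,
       blocking_pair g kappa lambda icg jcg ib jb ->
       nash (n g) (m g) (a_c g kappa lambda) (b_c g kappa lambda) ib jb ->
       nash (n g) (m g) (a_b g kappa lambda w) (b_b g kappa lambda w) ib jb).
Proof.
  intros Hk Hl Hw HP1 HP2 [i0 [j0 [Hi0 [Hj0 [F1 [F2 F3]]]]]] icg jcg
    [Hicg [[vst [[[jm [Hjm Hjmv]] Hvmin] Hvmax]] [Hjcg Hbr]]].
  assert (Hv0 : P1 g i0 <= vst)
    by (apply (Hvmax i0); auto; apply (min_feasible g kappa lambda i0 j0); auto).
  assert (HP1i0 := HP1 i0 Hi0).
  assert (Hacg : vst <= a_c g kappa lambda icg jcg) by (apply Hvmin; split; auto).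
  assert (Hon1 : on1 g icg = true /\ coll g icg jcg = false).
  { unfold a_c in Hacg; destruct (on1 g icg), (coll g icg jcg); simpl in *; auto; lra. }
  destruct Hon1 as [Hon1 Hcol].
  assert (Hon2 : on2 g jcg = true).
  { destruct (on2 g jcg) eqn:E; auto.
    assert (Hb0 := Hbr j0 Hj0). unfold b_c in Hb0. rewrite E, F2 in Hb0. simpl in Hb0.
    destruct (coll g icg j0) eqn:C; [|assert (0 <= P2 g j0) by (apply HP2; auto); simpl in Hb0; lra].
    assert (kappa = lambda) by lra.
    assert (Hm0 : vst <= a_c g kappa lambda icg j0).
    { apply Hvmin; split; auto. intros j' Hj'. assert (Hx := Hbr j' Hj').
      assert (Ej0 : b_c g kappa lambda icg j0 = lambda) by (unfold b_c; rewrite F2, C; reflexivity).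
      assert (Ejc : b_c g kappa lambda icg jcg = kappa) by (unfold b_c; rewrite E; reflexivity).
      rewrite Ej0; rewrite Ejc in Hx; lra. }
    unfold a_c in Hm0; rewrite Hon1, C in Hm0; simpl in Hm0; lra. }
  assert (Hacg' : a_c g kappa lambda icg jcg = P1 g icg) by (unfold a_c; rewrite Hon1, Hcol; reflexivity).
  assert (Hbcg : b_c g kappa lambda icg jcg = P2 g jcg) by (unfold b_c; rewrite Hon2, Hcol; reflexivity).
  assert (HP1c := HP1 icg Hicg). assert (HP2c := HP2 jcg Hjcg).
  split.
  - split; [auto|split; [auto|split]].
    + intros i Hi.
      assert (Hab : a_b g kappa lambda w icg jcg >= P1 g icg).
      { unfold a_b; rewrite Hon1, Hcol; simpl; destruct Rlt_dec; lra. }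
      unfold a_b at 1. destruct (on1 g i) eqn:O; simpl; [|lra].
      destruct (coll g i jcg) eqn:C; [lra|].
      assert (Hle : P1 g i <= vst)
        by (apply (Hvmax i); auto; apply (min_feasible g kappa lambda i jcg); auto).
      unfold a_b; rewrite Hon1, Hcol; simpl.
      destruct (Rlt_dec (P1 g i) (P2 g jcg)); destruct (Rlt_dec (P1 g icg) (P2 g jcg)); lra.
    + intros j Hj.
      assert (Hb := Hbr j Hj).
      unfold b_b at 1. destruct (on2 g j) eqn:O; simpl; [|unfold b_b; rewrite Hon2, Hcol; simpl; destruct Rge_dec; lra].
      destruct (coll g icg j) eqn:C; [unfold b_b; rewrite Hon2, Hcol; simpl; destruct Rge_dec; lra|].
      rewrite Hbcg in Hb. unfold b_c in Hb; rewrite O, C in Hb; simpl in Hb.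
      unfold b_b; rewrite Hon2, Hcol; simpl.
      destruct (Rge_dec (P1 g icg) (P2 g j)); destruct (Rge_dec (P1 g icg) (P2 g jcg)); lra.
  - intros ib jb [Hib [Hjb [_ [Hgt [[G1 [G2 G3]] _]]]]] [_ [_ [NA NB]]].
    assert (Hacb : a_c g kappa lambda ib jb = P1 g ib) by (unfold a_c; rewrite G1, G3; reflexivity).
    assert (Hbcb : b_c g kappa lambda ib jb = P2 g jb) by (unfold b_c; rewrite G2, G3; reflexivity).
    assert (Habb : a_b g kappa lambda w ib jb = P1 g ib + w).
    { unfold a_b; rewrite G1, G3; simpl; destruct Rlt_dec; [lra|reflexivity]. }
    assert (Hbbb : b_b g kappa lambda w ib jb = P2 g jb).
    { unfold b_b; rewrite G2, G3; simpl; destruct Rge_dec; [reflexivity|lra]. }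
    assert (HPjb := HP2 jb Hjb).
    split; [auto|split; [auto|split]].
    + intros i Hi. rewrite Habb. assert (Ha := NA i Hi). rewrite Hacb in Ha.
      unfold a_c in Ha; unfold a_b.
      destruct (on1 g i); simpl in *; [|lra].
      destruct (coll g i jb); [lra|]. destruct Rlt_dec; lra.
    + intros j Hj. rewrite Hbbb. assert (Hb := NB j Hj). rewrite Hbcb in Hb.
      unfold b_c in Hb; unfold b_b.
      destruct (on2 g j); simpl in *; [|lra].
      destruct (coll g ib j); [lra|]. destruct Rge_dec; lra.
Qed.
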